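(* Let $d\ge 1$ and let $f:\mathbb{R}^d\setminus\{0\}\to\mathbb{R}$ be differentiable and scale-invariant, i.e. $f(c\mathbf{w})=f(\mathbf{w})$ for all $\mathbf{w}\neq 0$ and all $c>0$. Fix a learning rate $\eta>0$, a momentum coefficient $\beta\in[0,1)$, and an initial point $\mathbf{w}_0\neq 0$. Define the momentum gradient descent iterates by $\mathbf{p}_{-1}=0$ and, for $t\ge 0$, $$\mathbf{p}_t=\beta\,\mathbf{p}_{t-1}+\nabla f(\mathbf{w}_t),\qquad \mathbf{w}_{t+1}=\mathbf{w}_t-\eta\,\mathbf{p}_t$$ (assuming all iterates $\mathbf{w}_t$ are nonzero so that the gradients are defined). Then for every $t\ge 0$, $$\|\mathbf{w}_{t+1}\|_2^2=\|\mathbf{w}_t\|_2^2+\eta^2\|\mathbf{p}_t\|_2^2+2\eta^2\sum_{k=0}^{t-1}\beta^{t-k}\|\mathbf{p}_k\|_2^2 .$$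
   Context: Scale invariance of $f$ means $f(c\mathbf{w})=f(\mathbf{w})$ for every $c>0$; for such differentiable $f$ one has $\mathbf{w}\cdot\nabla f(\mathbf{w})=0$. The update rule above is the (heavy-ball) momentum gradient descent with no weight decay; the empty sum (for $t=0$) is zero. *)

(* Defs.v *)
From HB Require Import structures.
From mathcomp Require Import all_boot all_order all_algebra.
From mathcomp Require Import all_classical all_reals all_analysis.
Set Implicit Arguments. Unset Strict Implicit. Unset Printing Implicit Defensive.
Import Order.TTheory GRing.Theory Num.Theory.
Import numFieldNormedType.Exports.
Local Open Scope ring_scope.

Definition basis_vec (R : realType) (d : nat) (i : 'I_d) : 'rV[R]_d :=
  delta_mx 0 i.

Definition grad (R : realType) (d : nat) (f : 'rV[R]_d -> R) (w : 'rV[R]_d)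
  : 'rV[R]_d :=
  \row_i ('D_(basis_vec R i) f w).

Definition sqnorm2 (R : realType) (d : nat) (v : 'rV[R]_d) : R :=
  \sum_(i < d) (v 0 i) ^+ 2.

(* Main.v *)
Require Import Defs.
From HB Require Import structures.
From mathcomp Require Import all_boot all_order all_algebra.
From mathcomp Require Import all_classical all_reals all_analysis.
Import Order.TTheory GRing.Theory Num.Theory.
Import numFieldNormedType.Exports.
From mathcomp Require Import ring.
Local Open Scope ring_scope.
Lemma scale_inv_D (R : realType) (d : nat) (f : 'rV[R]_d -> R) (w : 'rV[R]_d)
  (f_scale : forall (w : 'rV[R]_d) (c : R), w != 0 -> 0 < c -> f (c *: w) = f w) :
  w != 0 -> 'D_w f w = 0.
Proof.
move=> wn0.
apply/lim_near_cst => //=.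
near=> h.
have h1 : `|h| < 1 by near: h; apply: dnbhs0_lt.
have h2 : 0 < h + 1.
  move: h1; rewrite ltr_norml => /andP[h1 _]; by rewrite -ltrBlDr sub0r.
rewrite /shift /= -{2}(scale1r w) -scalerDl f_scale // subrr scaler0 //.
Unshelve. all: by end_near. Qed.

Definition dot {R : realType} {d : nat} (u v : 'rV[R]_d) : R :=
  \sum_(i < d) u 0 i * v 0 i.

Lemma dot_grad (R : realType) (d : nat) (f : 'rV[R]_d -> R) (w : 'rV[R]_d) :
  differentiable f w -> dot w (grad f w) = 'D_w f w.
Proof.
move=> df; rewrite /dot deriveE //.
have -> : 'd f w w = 'd f w (\sum_(j < d) w 0 j *: delta_mx 0 j) by rewrite -row_sum_delta.
rewrite linear_sum.
apply: eq_bigr => i _; rewrite linearZ /= mxE /basis_vec deriveE //.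
Qed.

Lemma dotC (R : realType) (d : nat) (u v : 'rV[R]_d) : dot u v = dot v u.
Proof. by apply: eq_bigr => i _; rewrite mulrC. Qed.

Lemma dotDl (R : realType) (d : nat) (a : R) (u v x : 'rV[R]_d) :
  dot (a *: u + v) x = a * dot u x + dot v x.
Proof.
rewrite /dot mulr_sumr -big_split; apply: eq_bigr => i _.
by rewrite !mxE mulrDl mulrA.
Qed.

Lemma sqnorm_dot (R : realType) (d : nat) (u : 'rV[R]_d) : sqnorm2 u = dot u u.
Proof. by apply: eq_bigr => i _; rewrite expr2. Qed.

Lemma sq_expand (R : realType) (d : nat) (e : R) (u v : 'rV[R]_d) :
  sqnorm2 (u - e *: v) = sqnorm2 u + e ^+ 2 * sqnorm2 v - 2 * e * dot u v.
Proof.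
rewrite /sqnorm2 /dot !mulr_sumr -sumrN -!big_split; apply: eq_bigr => i _.
rewrite !mxE.
have H : forall a b : R, (a - e*b)^+2 = a^+2 + e^+2*b^+2 - 2*e*(a*b) by move=> a b; ring.
exact: H.
Qed.

Theorem mainTheorem1 (R : realType) (d : nat) (hd : (1 <= d)%N)
  (f : 'rV[R]_d -> R)
  (f_diff : forall w : 'rV[R]_d, w != 0 -> differentiable f w)
  (f_scale : forall (w : 'rV[R]_d) (c : R), w != 0 -> 0 < c -> f (c *: w) = f w)
  (eta beta : R) (heta : 0 < eta) (hbeta0 : 0 <= beta) (hbeta1 : beta < 1)
  (w p : nat -> 'rV[R]_d)
  (hw_nz : forall t, w t != 0)
  (hp0 : p 0%N = grad f (w 0%N))
  (hpS : forall t, p t.+1 = beta *: p t + grad f (w t.+1))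
  (hwS : forall t, w t.+1 = w t - eta *: p t) :
  forall t : nat,
    sqnorm2 (w t.+1) =
      sqnorm2 (w t) + eta ^+ 2 * sqnorm2 (p t)
      + 2 * eta ^+ 2 * \sum_(k < t) beta ^+ (t - k) * sqnorm2 (p k).
Proof.
have g0 : forall t, dot (w t) (grad f (w t)) = 0.
  move=> t; rewrite dot_grad; last exact: f_diff.
  exact: (@scale_inv_D _ _ _ _ f_scale (hw_nz t)).
have key : forall t, dot (w t) (p t) =
    - eta * \sum_(k < t) beta ^+ (t - k) * sqnorm2 (p k).
  move=> t; elim: t => [|t IH]; first by rewrite hp0 g0 big_ord0 mulr0.
  rewrite hpS dotC dotDl (@dotC _ _ (grad f (w t.+1))) g0 addr0.
  rewrite hwS (@dotC _ _ (p t)) (addrC (w t)) -scaleNr dotDl IH big_ord_recr /= subSnn expr1.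
  rewrite -sqnorm_dot.
  have -> : \sum_(i < t) beta ^+ (t.+1 - i) * sqnorm2 (p i)
          = beta * \sum_(i < t) beta ^+ (t - i) * sqnorm2 (p i).
    rewrite mulr_sumr; apply: eq_bigr => i _.
    by rewrite subSn ?(ltnW (ltn_ord i)) // exprS mulrA.
  ring.
move=> t.
rewrite hwS sq_expand key.
ring.
Qed.
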